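(* Let $\kappa\ge2$ be a real number. Then $\lim_{\zeta\to0^+}\Upsilon_{\kappa,\zeta}=0$.
   Context: For real $\kappa\ge2$, $\mathcal{P}_\kappa$ is the set of all irreducible monic polynomials $p\in\mathbb{Z}[x]$ all of whose roots lie in $[-\kappa,\kappa]$. For real $\zeta>0$, $\mathbf{I}_{\kappa,\zeta}$ is the set of all closed intervals of length $\zeta$ contained in $[-\kappa,\kappa]$. For $p\in\mathcal{P}_\kappa$ and $I\in\mathbf{I}_{\kappa,\zeta}$ put $\Upsilon_\kappa(p,I)=\big(|\{\theta\in I:p(\theta)=0\}|-1\big)/\deg p$, and $\Upsilon_{\kappa,\zeta}=\sup\{\Upsilon_\kappa(p,I):p\in\mathcal{P}_\kappa,\ I\in\mathbf{I}_{\kappa,\zeta}\}$. *)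

(* Defs.v *)
From HB Require Import structures.
From mathcomp Require Import all_boot all_order all_algebra.
From mathcomp Require Import all_classical all_reals all_analysis.
From mathcomp Require Import complex.
Set Implicit Arguments. Unset Strict Implicit. Unset Printing Implicit Defensive.
Import Order.TTheory GRing.Theory Num.Theory.
Local Open Scope ring_scope.
Local Open Scope classical_set_scope.

Definition in_P (R : realType) (kappa : R) (p : {poly int}) : Prop :=
  [/\ p \is monic, irreducible_poly p &
      forall z : R[i], root (map_poly (fun c : int => (c%:~R : R[i])) p) z ->
        complex.Im z = 0 /\ - kappa <= complex.Re z <= kappa].

(* The closed interval [a, a + zeta] is in I_{kappa,zeta} *)
Definition in_I (R : realType) (kappa zeta a : R) : Prop :=
  - kappa <= a /\ a + zeta <= kappa.

(* Upsilon_kappa(p, [a, a+zeta]) = (#{theta in I : p(theta) = 0} - 1)/deg p,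
   the number of roots being the size of a duplicate-free list enumerating them *)
Definition Upsilon_pI (R : realType) (p : {poly int}) (a b : R) (u : R) : Prop :=
  exists s : seq R, [/\ uniq s,
    (forall t : R, t \in s <-> (a <= t <= b /\ (map_poly intr p).[t] = 0)) &
    u = ((size s)%:R - 1) / ((size p).-1)%:R].

Definition Upsilon_set (R : realType) (kappa zeta : R) : set R :=
  [set u | exists (p : {poly int}) (a : R),
     [/\ in_P kappa p, in_I kappa zeta a & Upsilon_pI p a (a + zeta) u]].

Definition Upsilon (R : realType) (kappa zeta : R) : R :=
  sup (Upsilon_set kappa zeta).

(* Main.v *)
Require Import Defs.
From HB Require Import structures.
From mathcomp Require Import all_boot all_order all_algebra.
From mathcomp Require Import all_classical all_reals all_analysis.
From mathcomp Require Import complex.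
From mathcomp Require Import ring lra.
Import Order.TTheory GRing.Theory Num.Theory.
Local Open Scope ring_scope.
Set Implicit Arguments. Unset Strict Implicit.

Lemma prod_cst_seq (R : comNzRingType) (T : Type) (s : seq T) (c : R) :
  \prod_(a <- s) c = c ^+ size s.
Proof. by elim: s => [|x s IH]; rewrite ?big_nil ?big_cons ?IH ?exprS. Qed.

Lemma det_subC (R : comNzRingType) n' (A : 'M[R]_n'.+1) b :
  \det (A - b%:M) = (-1) ^+ n'.+1 * (char_poly A).[b].
Proof.
rewrite /char_poly.
have -> : (\det (char_poly_mx A)).[b] = horner_eval b (\det (char_poly_mx A)) by [].
rewrite -det_map_mx -detZ.
congr (\det _); apply/matrixP => i j.
rewrite !mxE /horner_eval /=.
idtac.
rewrite /horner_eval hornerD hornerN hornerC hornerMn hornerX; ring.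
Qed.

Lemma det_horner_closed (F : closedFieldType) n' (A : 'M[F]_n'.+1) (s : seq F)
  (q : {poly F}) :
  char_poly A = \prod_(a <- s) ('X - a%:P) ->
  \det (horner_mx A q) = \prod_(a <- s) q.[a].
Proof.
move=> hA.
have hs : size s = n'.+1.
  by have := size_char_poly A; rewrite hA size_prod_XsubC => -[].
have [r Hq] := closed_field_poly_normal q.
set c := lead_coef q in Hq.
rewrite Hq linearZ /= detZ rmorph_prod /=.
rewrite (big_morph _ (@det_mulmx F n'.+1) (det1 _ _)).
under eq_bigr => b _ do rewrite rmorphB /= horner_mx_X horner_mx_C det_subC hA horner_prod.
under [RHS]eq_bigr => a _ do rewrite hornerZ horner_prod.
rewrite [RHS]big_split /= prod_cst_seq hs; congr (_ * _).
rewrite [RHS]exchange_big /=; apply: eq_bigr => b _.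
rewrite -hs -(prod_cst_seq s) -big_split /=; apply: eq_bigr => a _.
by rewrite !hornerE; ring.
Qed.

Lemma disc_int (p : {poly int}) : p \is monic -> (1 < size p)%N ->
  exists z : int, forall (F : closedFieldType) (s : seq F),
  map_poly intr p = \prod_(a <- s) ('X - a%:P) ->
  \prod_(a <- s) (map_poly intr p^`()).[a] = z%:~R.
Proof.
move=> pm sp.
have [d [C hC]] : {d : nat & {C : 'M[int]_d | char_poly C = p}}.
  by exists _, (companionmx p); exact: companionmxK.
case: d C hC => [|n'] C hC.
  by move: sp; rewrite -hC /char_poly det_mx00 size_poly1.
exists (\det (horner_mx C p^`())) => F s hs.
have hA : char_poly (map_mx intr C) = \prod_(a <- s) ('X - a%:P).
  by rewrite -map_char_poly hC hs.
rewrite -(det_horner_closed _ hA) -det_map_mx map_horner_mx.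
by [].
Qed.

Lemma deriv_neq0 (p : {poly int}) : p \is monic -> (1 < size p)%N -> p^`() != 0.
Proof.
move=> pm sp; apply/eqP => h.
have := coef_deriv p (size p).-2; rewrite h coef0.
have -> : (size p).-2.+1 = (size p).-1 by case: (size p) sp => [|[|k]].
rewrite -lead_coefE (monicP pm) => /eqP; rewrite eq_sym pmulrn intr_eq0.
by case: (size p) sp => [|[|k]].
Qed.

Lemma deriv_root_neq0 (R : numDomainType) (p : {poly int}) :
  p \is monic -> irreducible_poly p -> forall x : R,
  root (map_poly intr p) x -> (map_poly intr p^`()).[x] != 0.
Proof.
move=> pm ip x rx; have sp := ip.1.
have dn0 := deriv_neq0 pm sp.
have [sd|sd] := ltnP 1 (size p^`()).
  have [[u v] _ E] := resultant_in_ideal sp sd.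
  apply/negP => /eqP hd.
  have := congr1 (fun P => (map_poly intr P).[x]) E.
  rewrite /= rmorphD !rmorphM /= map_polyC hornerC hornerD !hornerM hd.
  move: rx => /rootP ->; rewrite !mulr0 addr0 => /eqP; rewrite intr_eq0.
  rewrite resultant_eq0 => hg.
  have hgp : gcdp p p^`() %= p.
    by apply: ip.2; [rewrite neq_ltn hg orbT | exact: dvdp_gcdl].
  have : p %| p^`() by rewrite -(eqp_dvdl _ hgp) dvdp_gcdr.
  move/(dvdp_leq dn0); rewrite leqNgt lt_size_deriv //.
  by rewrite -size_poly_gt0 (ltn_trans _ sp).
rewrite [p^`()]size1_polyC // map_polyC hornerC intr_eq0.
by apply: contra dn0 => /eqP h0; rewrite [p^`()]size1_polyC // h0 polyC0.
Qed.

Lemma deriv_prod_root (R : idomainType) (rs : seq R) x : x \in rs ->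
  (\prod_(y <- rs) ('X - y%:P))^`().[x] = \prod_(y <- rem x rs) (x - y).
Proof.
move=> xr; rewrite (big_rem x) //= derivM derivXsubC hornerD !hornerM.
rewrite hornerC mul1r hornerXsubC subrr mul0r addr0 horner_prod.
by apply: eq_bigr => y _; rewrite hornerXsubC.
Qed.

Lemma uniq_of_rem (T : eqType) (s : seq T) :
  (forall x, x \in s -> x \notin rem x s) -> uniq s.
Proof.
elim: s => //= y s IH H; apply/andP; split.
  by have := H y; rewrite inE eqxx /=; apply.
apply: IH => x xs; have := H x; rewrite inE xs orbT /=.
case: eqP => [_ | _]; first by move/(_ isT); rewrite xs.
by move/(_ isT); rewrite inE negb_or => /andP[].
Qed.

Lemma sep_roots (R : idomainType) (rs : seq R) :
  (forall x, x \in rs -> (\prod_(y <- rs) ('X - y%:P))^`().[x] != 0) ->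
  uniq rs /\ forall x, x \in rs ->
    (\prod_(y <- rs) ('X - y%:P))^`().[x] = \prod_(y <- rs | y != x) (x - y).
Proof.
move=> H.
have U : uniq rs.
  apply: uniq_of_rem => x xr; have := H x xr; rewrite deriv_prod_root //.
  by apply: contra => xi; rewrite (big_rem x) //= subrr mul0r.
split => // x xr; rewrite deriv_prod_root // rem_filter // big_filter.
by apply: eq_bigl => y.
Qed.

Lemma map_rc_intr (R : rcfType) (q : {poly int}) :
  map_poly (real_complex R) (map_poly intr q) = map_poly intr q.
Proof.
rewrite -map_poly_comp; apply: eq_map_poly => c /=.
by rewrite rmorph_int.
Qed.

Lemma int_prod (R : rcfType) (p : {poly int}) (rs : seq R) :
  p \is monic -> (1 < size p)%N ->
  map_poly intr p = \prod_(x <- rs) ('X - x%:P) ->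
  exists z : int, \prod_(x <- rs) (map_poly intr p^`()).[x] = z%:~R.
Proof.
move=> pm sp hp; have [z hz] := disc_int pm sp; exists z.
apply: (fmorph_inj (real_complex R)); rewrite rmorph_int rmorph_prod /=.
rewrite -(hz _ (map (real_complex R) rs)); last first.
  rewrite -(map_rc_intr R p) hp rmorph_prod big_map.
  by apply: eq_bigr => x _; exact: map_polyXsubC.
rewrite big_map; apply: eq_bigr => x _.
by rewrite -horner_map map_rc_intr.
Qed.

Lemma real_roots (R : rcfType) (kappa : R) (p : {poly int}) : p \is monic ->
  (forall z : R[i], root (map_poly (fun c : int => (c%:~R : R[i])) p) z ->
     complex.Im z = 0 /\ - kappa <= complex.Re z <= kappa) ->
  exists rs : seq R, map_poly intr p = \prod_(x <- rs) ('X - x%:P) /\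
     (forall x, x \in rs -> - kappa <= x <= kappa).
Proof.
move=> pm H.
have e : (fun c : int => (c%:~R : R[i])) = intr by [].
rewrite e in H.
have [r hr] := closed_field_poly_normal (map_poly intr p : {poly R[i]}).
have mC : (map_poly intr p : {poly R[i]}) \is monic := monic_map _ pm.
rewrite (monicP mC) scale1r in hr.
have hz : forall z, z \in r -> complex.Im z = 0 /\ - kappa <= complex.Re z <= kappa.
  by move=> z zr; apply: H; rewrite hr root_prod_XsubC.
exists (map (@complex.Re R) r); split; last first.
  by move=> x /mapP[z zr ->]; have [] := hz z zr.
apply: (map_poly_inj (real_complex R)); rewrite map_rc_intr hr rmorph_prod big_map.
apply: eq_big_seq => z zr /=; rewrite map_polyXsubC; congr (_ - _%:P).
have [hi _] := hz z zr; move: hi; case: z {zr} => a b /= ->.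
by [].
Qed.

Lemma prod_cst_count (R : comNzRingType) (T : Type) (s : seq T) (P : pred T) (c : R) :
  \prod_(a <- s | P a) c = c ^+ count P s.
Proof.
elim: s => [|x s IH]; rewrite ?big_nil ?big_cons ?IH //=.
by case: (P x); rewrite ?exprS ?add1n ?add0n.
Qed.

Lemma sum_cst_count (T : Type) (s : seq T) (P : pred T) (c : nat) :
  (\sum_(a <- s | P a) c = count P s * c)%N.
Proof.
elim: s => [|x s IH]; rewrite ?big_nil ?big_cons ?IH //=.
by case: (P x); rewrite /= ?mulSn ?add0n.
Qed.

Lemma count_others (T : eqType) (J : pred T) (s : seq T) x :
  uniq s -> x \in s -> J x -> count (fun y => (y != x) && J y) s = (count J s).-1.
Proof.
elim: s => //= y t IH /andP[yt ut]; rewrite inE => xin Jx.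
have [yx|yx] := eqVneq y x.
  rewrite yx Jx /= !add0n.
  apply: eq_in_count => z zt /=; case: eqP => // zx.
  by move: yt; rewrite yx -zx zt.
move: xin; rewrite eq_sym (negPf yx) /= => xt.
rewrite IH //.
have : (0 < count J t)%N by rewrite -has_count; apply/hasP; exists x.
by case: (count J t) => // k _; case: (J y).
Qed.

Lemma prod_bound (R : realFieldType) (kappa zeta a : R) (rs : seq R) :
  uniq rs -> (forall x, x \in rs -> - kappa <= x <= kappa) -> 0 <= zeta <= 1 ->
  1 <= 2 * kappa ->
  `|\prod_(x <- rs) \prod_(y <- rs | y != x) (x - y)| <=
   (2 * kappa) ^+ (size rs * size rs) *
   zeta ^+ (count (fun x => a <= x <= a + zeta) rs * (count (fun x => a <= x <= a + zeta) rs).-1).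
Proof.
move=> U B /andP[z0 z1] K1.
set K := 2 * kappa. set J := (fun x => a <= x <= a + zeta).
set m := count J rs.
have K0 : 0 <= K by apply: le_trans K1.
rewrite normr_prod.
under eq_bigr => x _ do rewrite normr_prod.
have step : forall x, x \in rs ->
   \prod_(y <- rs | y != x) `|x - y| <=
   K ^+ size rs * zeta ^+ (if J x then m.-1 else 0%N).
  move=> x xr.
  apply: (@le_trans _ _ (\prod_(y <- rs | y != x) (K * zeta ^+ (J x && J y)))).
    rewrite big_seq_cond [X in _ <= X]big_seq_cond.
    apply: ler_prod => y /andP[yr _]; rewrite normr_ge0 /=.
    have /andP[bx1 bx2] := B x xr; have /andP[by1 by2] := B y yr.
    case Jxy: (J x && J y) => /=.
      move: Jxy; rewrite /J => /andP[/andP[jx1 jx2] /andP[jy1 jy2]].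
      rewrite expr1; apply: (@le_trans _ _ zeta); last by rewrite ler_peMl.
      by rewrite ler_norml; apply/andP; split; lra.
    by rewrite expr0 mulr1 ler_norml; apply/andP; split; rewrite /K; lra.
  rewrite big_split /= prod_cst_count.
  apply: ler_pM.
  - exact: exprn_ge0.
  - by apply: prodr_ge0 => i _; exact: exprn_ge0.
  - exact: (ler_weXn2l K1 (count_size _ _)).
  have -> : \prod_(i <- rs | i != x) zeta ^+ (J x && J i) =
            \prod_(i <- rs | (i != x) && (J x && J i)) zeta.
    by rewrite big_mkcondr; apply: eq_bigr => i _; case: (J x && J i).
  rewrite prod_cst_count; case Jx: (J x).
    by rewrite -(count_others U xr Jx).
  by rewrite (@eq_count _ _ pred0) ?count_pred0 // => i; rewrite andbF.
rewrite big_seq_cond.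
apply: (@le_trans _ _ (\prod_(x <- rs | (x \in rs) && true)
    (K ^+ size rs * zeta ^+ (if J x then m.-1 else 0%N)))).
  apply: ler_prod => x /andP[xr _]; rewrite step // andbT.
  by apply: prodr_ge0 => y _; exact: normr_ge0.
rewrite -big_seq_cond big_split /= !prodrXr.
rewrite (sum_cst_count rs predT) count_predT.
rewrite -big_mkcond /= sum_cst_count.
by [].
Qed.

Section Key.
Local Open Scope classical_set_scope.

Lemma key (R : realType) (kappa zeta a u : R) (p : {poly int}) (N : nat) :
  in_P kappa p -> Upsilon_pI p a (a + zeta) u -> 0 < zeta <= 1 -> 1 <= 2 * kappa ->
  (0 < N)%N -> zeta * (2 * kappa) ^+ (N * N) < 1 -> u <= N%:R^-1.
Proof.
move=> [pm ip hroots] [s [us hs ->]] /andP[z0 z1] K1 N0 hz.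
have sp := ip.1.
have [rs [hp B]] := real_roots pm hroots.
have dn : forall x, x \in rs -> (\prod_(y <- rs) ('X - y%:P))^`().[x] != 0.
  move=> x xr; rewrite -hp deriv_map; apply: deriv_root_neq0 => //.
  by rewrite hp root_prod_XsubC.
have [U D] := sep_roots dn.
have [z hz'] := int_prod pm sp hp.
set J := (fun x : R => a <= x <= a + zeta).
have Pz : \prod_(x <- rs) \prod_(y <- rs | y != x) (x - y) = z%:~R.
  rewrite -hz'; apply: eq_big_seq => x xr.
  by rewrite -D // -hp deriv_map.
have Pn0 : z%:~R != 0 :> R.
  rewrite -hz' prodf_seq_neq0; apply/allP => x xr /=.
  by have := dn x xr; rewrite -hp deriv_map.
have P1 : 1 <= `|\prod_(x <- rs) \prod_(y <- rs | y != x) (x - y)|.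
  by rewrite Pz; apply: norm_intr_ge1 => //; exact: intr_int.
have hz01 : 0 <= zeta <= 1 by rewrite (ltW z0) z1.
have PB := prod_bound a U B hz01 K1.
rewrite -/J in PB.
have sz : size s = count J rs.
  rewrite -size_filter; apply: perm_size; apply: uniq_perm => //.
    exact: filter_uniq.
  move=> t; rewrite mem_filter; apply/idP/idP.
    move/hs => [ht hr]; rewrite /J ht /=.
    by rewrite -root_prod_XsubC -hp; apply/rootP.
  move=> /andP[ht tr]; apply/hs; split => //.
  by apply/rootP; rewrite hp root_prod_XsubC.
have sp' : (size p).-1 = size rs.
  have := congr1 (fun q : {poly R} => size q) hp; rewrite size_prod_XsubC size_map_poly_id0 => [->//|].
  by rewrite (monicP pm) intr_eq0.
rewrite sp' sz.
set n := size rs.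
have n0 : (0 < n)%N by rewrite /n -sp'; case: (size p) sp => [|[|k]].
have n0R : 0 < n%:R :> R by rewrite ltr0n.
case hm: (count J rs) PB => [|m'] PB.
  rewrite sub0r mulNr mul1r; apply: (@le_trans _ _ 0).
    by rewrite oppr_le0 invr_ge0 ler0n.
  by rewrite invr_ge0 ler0n.
rewrite -natr1 addrK.
have hN : (N * m' <= n)%N.
  rewrite leqNgt; apply/negP => hlt.
  set K := 2 * kappa in PB hz.
  have K0 : 0 <= K by apply: le_trans K1.
  have : 1 <= (K ^+ (n * n) * zeta ^+ (m'.+1 * m')) ^+ (N * N).
    by apply: exprn_ege1; exact: le_trans P1 PB.
  rewrite exprMn -!exprM.
  have e1 : zeta ^+ (m'.+1 * m' * (N * N)) <= zeta ^+ (n * n).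
    apply: ler_wiXn2l => //; first exact: ltW.
    apply: (leq_trans (leq_mul (ltnW hlt) (ltnW hlt))).
    rewrite mulnACA [X in (_ <= X)%N]mulnC.
    by rewrite leq_mul2l leq_mul2r leqnSn !orbT.
  have e2 : K ^+ (n * n * (N * N)) * zeta ^+ (m'.+1 * m' * (N * N)) <=
            K ^+ (n * n * (N * N)) * zeta ^+ (n * n).
    by apply: ler_wpM2l => //; exact: exprn_ge0.
  have e3 : K ^+ (n * n * (N * N)) * zeta ^+ (n * n) < 1.
    rewrite mulnC exprM -exprMn mulrC exprn_ilt1 //.
      by rewrite muln_eq0 negb_or -!lt0n n0.
    by rewrite mulr_ge0 ?exprn_ge0 // ltW.
  move=> h; have := le_lt_trans (le_trans h e2) e3; by rewrite ltxx.
have N0R : 0 < N%:R :> R by rewrite ltr0n.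
rewrite ler_pdivrMr // mulrC ler_pdivlMr // -natrM ler_nat.
by rewrite mulnC.
Qed.

End Key.


Unset Implicit Arguments.
Section Final.
Local Open Scope classical_set_scope.

Lemma X_in (R : realType) (kappa zeta : R) : 2 <= kappa -> 0 < zeta <= 1 ->
  Upsilon_set kappa zeta 0.
Proof.
move=> hk /andP[z0 z1].
exists 'X, (- zeta / 2); split.
- split; first exact: monicX.
    by have := irredp_XsubC (0 : int); rewrite subr0.
  move=> z; rewrite map_polyX => /rootP; rewrite hornerX => ->.
  by split => //=; apply/andP; split; lra.
- by split; lra.
- exists [:: 0]; split => //.
    move=> t; rewrite inE map_polyX hornerX; split.
      by move/eqP => ->; split => //; apply/andP; split; lra.
    by case => _ ->.
  by rewrite size_polyX /= subrr mul0r.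
Qed.

Theorem theorem5p4 (R : realType) (kappa : R) (hk : 2 <= kappa) :
  Upsilon kappa zeta @[zeta --> 0^'+] --> 0.
Proof.
apply/cvgrPdist_le => e e0.
have K1 : 1 <= 2 * kappa by lra.
pose N := (Num.truncn (e^-1)).+1.
have hN : e^-1 < N%:R := truncnS_gt _.
have N0 : (0 < N)%N by [].
have Ne : N%:R^-1 <= e.
  rewrite -[X in _ <= X]invrK lef_pV2 ?posrE ?invr_gt0 ?ltr0n //; exact: ltW.
have KN1 : 1 <= (2 * kappa) ^+ (N * N) by exact: exprn_ege1.
have KN0 : 0 < (2 * kappa) ^+ (N * N) by apply: lt_le_trans KN1.
have d0 : 0 < 1 / (2 * kappa) ^+ (N * N) by rewrite divr_gt0.
near=> zeta.
have z0 : 0 < zeta by near: zeta; exact: nbhs_right_gt.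
have zd : zeta < 1 / (2 * kappa) ^+ (N * N) by near: zeta; exact: nbhs_right_lt.
have hz : zeta * (2 * kappa) ^+ (N * N) < 1 by rewrite -ltr_pdivlMr.
have z1 : zeta <= 1.
  apply: ltW; apply: (lt_le_trans zd); rewrite ler_pdivrMr // mul1r //.
have hz01 : 0 < zeta <= 1 by rewrite z0 z1.
have ub : ubound (Upsilon_set kappa zeta) (N%:R^-1).
  move=> u [p [a [hp _ hu]]]; exact: key hp hu hz01 K1 N0 hz.
have ne : Upsilon_set kappa zeta !=set0 by exists 0; exact: X_in.
have s1 : Upsilon kappa zeta <= N%:R^-1 by exact: ge_sup.
have s0 : 0 <= Upsilon kappa zeta.
  apply: (sup_upper_bound (conj ne (ex_intro _ _ ub))); exact: X_in.
rewrite sub0r normrN ger0_norm //; exact: le_trans s1 Ne.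
Unshelve. all: end_near.
Qed.

End Final.
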